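(* Let $\mathcal{G}=\langle\mathcal{Q},\mathbf{f}\rangle$ be a monotone NEP satisfying Assumption 2, with nonempty set of Nash equilibria, and let $\tau>0$ be such that $\boldsymbol{\Upsilon}_{\mathbf{F}_{\tau,\mathbf{y}}}$ is a P-matrix for every $\mathbf{y}$ (so $\mathcal{G}_{\tau,\mathbf{y}}$ has a unique NE $\mathbf{S}_\tau(\mathbf{y})$). Let $\{\varepsilon^{(n)}\}\subset[0,\infty)$ with $\sum_n\varepsilon^{(n)}<\infty$ and $\{\eta^{(n)}\}\subset[R_m,R_M]$ with $0<R_m\le R_M<2$. Consider any sequence defined by $\mathbf{x}^{(0)}\in\mathcal{Q}$ and, for $n\ge0$, $\mathbf{x}^{(n+1)}=(1-\eta^{(n)})\mathbf{x}^{(n)}+\eta^{(n)}\mathbf{z}^{(n)}$, where $\mathbf{z}^{(n)}$ is any point with $\|\mathbf{z}^{(n)}-\mathbf{S}_\tau(\mathbf{x}^{(n)})\|\le\varepsilon^{(n)}$. Then $\{\mathbf{x}^{(n)}\}$ converges to a NE of $\mathcal{G}$.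
   Context: Real NEP: player $i$ chooses $\mathbf{x}_i\in\mathcal{Q}_i\subseteq\mathbb{R}^{n_i}$ minimizing $f_i(\mathbf{x}_i,\mathbf{x}_{-i})$; $\mathcal{Q}=\prod_i\mathcal{Q}_i$. NE: $\mathbf{x}^\star\in\mathcal{Q}$ with $f_i(\mathbf{x}^\star_i,\mathbf{x}^\star_{-i})\le f_i(\mathbf{x}_i,\mathbf{x}^\star_{-i})$ for all $\mathbf{x}_i\in\mathcal{Q}_i$, all $i$. Assumption 1: $\mathcal{Q}_i$ nonempty closed convex, $f_i$ continuously differentiable on $\mathcal{Q}$ and convex in $\mathbf{x}_i$. Assumption 2: $f_i$ twice continuously differentiable with bounded derivatives on $\mathcal{Q}$. Monotone NEP: Assumption 1 and $\mathbf{F}(\mathbf{x})=(\nabla_{\mathbf{x}_i}f_i(\mathbf{x}))_i$ monotone on $\mathcal{Q}$. $\mathcal{G}_{\tau,\mathbf{y}}$: game where player $i$ minimizes $f_i(\mathbf{x}_i,\mathbf{x}_{-i})+\frac\tau2\|\mathbf{x}_i-\mathbf{y}_i\|^2$ over $\mathcal{Q}_i$, with gradient map $\mathbf{F}_{\tau,\mathbf{y}}=\mathbf{F}+\tau(\cdot-\mathbf{y})$. $\boldsymbol{\Upsilon}_{\mathbf{G}}$ for partitioned $\mathbf{G}$: diagonal $\inf_{\mathcal{Q}}\lambda_{\rm least}(\mathbf{J}_i\mathbf{G}_i)$, off-diagonal $-\sup_{\mathcal{Q}}\|\mathbf{J}_j\mathbf{G}_i\|_2$, $\lambda_{\rm least}(\mathbf{A})$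 smallest eigenvalue of $(\mathbf{A}+\mathbf{A}^T)/2$. P-matrix: all principal minors positive. *)

(* Defs.v *)
From Stdlib Require Import Reals.
From mathcomp Require Import all_boot all_fingroup.

Set Implicit Arguments.
Unset Strict Implicit.
Unset Printing Implicit Defensive.

Local Open Scope R_scope.

Definition rsum (T : finType) (g : T -> R) : R := \big[Rplus/R0]_(t : T) g t.
Definition nrm (T : finType) (v : T -> R) : R := sqrt (rsum (fun t => (v t)^2)).
Definition vsub (T : Type) (u v : T -> R) : T -> R := fun t => u t - v t.

(* N players; player i has dimension d i.  A coordinate of the full space
   R^{n_1+...+n_N} is a pair (i, k) with k : 'I_(d i). *)
Definition Idx (N : nat) (d : 'I_N -> nat) : finType := {i : 'I_N & 'I_(d i)}.
Definition profile (N : nat) (d : 'I_N -> nat) := Idx d -> R.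

Definition coord (N : nat) (d : 'I_N -> nat) (i : 'I_N) (k : 'I_(d i)) : Idx d :=
  existT (fun i => 'I_(d i)) i k.

Definition block (N : nat) (d : 'I_N -> nat) (x : profile d) (i : 'I_N)
  : 'I_(d i) -> R := fun k => x (coord k).
Arguments block {N d} x i.

Definition inQ (N : nat) (d : 'I_N -> nat) (Q : forall i : 'I_N, ('I_(d i) -> R) -> Prop)
  (x : profile d) : Prop := forall i, Q i (block x i).

Definition same_off (N : nat) (d : 'I_N -> nat) (i : 'I_N) (x y : profile d) : Prop :=
  forall a : Idx d, tag a <> i -> y a = x a.

Definition closed_blk (m : nat) (C : ('I_m -> R) -> Prop) : Prop :=
  forall u, ~ C u -> exists r, 0 < r /\ forall v, nrm (vsub v u) < r -> ~ C v.

Definition convex_blk (m : nat) (C : ('I_m -> R) -> Prop) : Prop :=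
  forall u v t, C u -> C v -> 0 <= t <= 1 ->
    C (fun k => t * u k + (1 - t) * v k).

Definition open_prof (T : finType) (O : (T -> R) -> Prop) : Prop :=
  forall x, O x -> exists r, 0 < r /\ forall y, nrm (vsub y x) < r -> O y.

Definition isNE (N : nat) (d : 'I_N -> nat) (Q : forall i : 'I_N, ('I_(d i) -> R) -> Prop)
  (g : 'I_N -> profile d -> R) (x : profile d) : Prop :=
  inQ Q x /\
  forall (i : 'I_N) (y : profile d), same_off i x y -> Q i (block y i) -> g i x <= g i y.

(* costs of the regularized game G_{tau,y}: f_i(x) + tau/2 ||x_i - y_i||^2 *)
Definition reg_costs (N : nat) (d : 'I_N -> nat) (f : 'I_N -> profile d -> R)
  (tau : R) (y : profile d) : 'I_N -> profile d -> R :=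
  fun i x => f i x + tau / 2 * (nrm (vsub (block x i) (block y i)))^2.

Definition upd (T : finType) (x : T -> R) (a : T) (t : R) : T -> R :=
  fun b => if b == a then t else x b.

Definition partial (T : finType) (g : (T -> R) -> R) (a : T) (x : T -> R) (D : R) : Prop :=
  derivable_pt_lim (fun t => g (upd x a t)) (x a) D.

Definition cont_on (T : finType) (O : (T -> R) -> Prop) (h : (T -> R) -> R) : Prop :=
  forall x, O x -> forall e, 0 < e -> exists del, 0 < del /\
    forall y, O y -> nrm (vsub y x) < del -> Rabs (h y - h x) < e.

Definition sym_eig (m : nat) (A : 'I_m -> 'I_m -> R) (lam : R) : Prop :=
  exists v : 'I_m -> R, (exists k, v k <> 0) /\
    forall k, rsum (fun l => (A k l + A l k) / 2 * v l) = lam * v k.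

Definition is_lambda_least (m : nat) (A : 'I_m -> 'I_m -> R) (lam : R) : Prop :=
  sym_eig A lam /\ forall mu, sym_eig A mu -> lam <= mu.

Definition is_spec_norm (p q : nat) (M : 'I_p -> 'I_q -> R) (s : R) : Prop :=
  is_lub (fun r => exists v : 'I_q -> R, nrm v = 1 /\
                     r = nrm (fun k => rsum (fun l => M k l * v l))) s.

Definition is_glb_R (E : R -> Prop) (m : R) : Prop :=
  (forall r, E r -> m <= r) /\ (forall b, (forall r, E r -> b <= r) -> b <= m).

Definition psign (N : nat) (s : {perm 'I_N}) : R := if odd_perm s then -1 else 1.

Definition principal_minor (N : nat) (U : 'I_N -> 'I_N -> R) (S : {set 'I_N}) : R :=
  \big[Rplus/R0]_(s : {perm 'I_N} | [forall i, (i \notin S) ==> (s i == i)])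
     (psign s * \big[Rmult/R1]_(i in S) U i (s i)).

Definition P_matrix (N : nat) (U : 'I_N -> 'I_N -> R) : Prop :=
  forall S : {set 'I_N}, S != set0 -> 0 < principal_minor U S.

(* Block Jacobian of a partitioned map G: JG i j x k l = d G_{(i,k)} / d x_{(j,l)} (x),
   i.e. JG i j x is J_j G_i (x). *)
Definition block_jac (N : nat) (d : 'I_N -> nat) :=
  forall i j : 'I_N, profile d -> 'I_(d i) -> 'I_(d j) -> R.

Definition is_Upsilon (N : nat) (d : 'I_N -> nat)
  (Q : forall i : 'I_N, ('I_(d i) -> R) -> Prop) (JG : block_jac d)
  (U : 'I_N -> 'I_N -> R) : Prop :=
  (forall i, is_glb_R (fun mu => exists x, inQ Q x /\ is_lambda_least (JG i i x) mu) (U i i)) /\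
  (forall i j, i <> j ->
     is_lub (fun s => exists x, inQ Q x /\ is_spec_norm (JG i j x) s) (- U i j)).

Definition F_tau (N : nat) (d : 'I_N -> nat) (F : profile d -> profile d) (tau : R)
  (y : profile d) : profile d -> profile d :=
  fun x a => F x a + tau * (x a - y a).

Definition conv_to (T : finType) (x : nat -> T -> R) (l : T -> R) : Prop :=
  forall e, 0 < e -> exists n0, forall n, (n0 <= n)%nat -> nrm (vsub (x n) l) < e.

(* the gradient map F(x) = (grad_{x_i} f_i(x))_i, from the first partials D1 i a x
   of f_i w.r.t. coordinate a *)
Definition grad (N : nat) (d : 'I_N -> nat) (D1 : 'I_N -> Idx d -> profile d -> R)
  : profile d -> profile d := fun x a => D1 (tag a) a x.

(* Main.v *)
Require Import Defs.
From HB Require Import structures.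
From Stdlib Require Import Reals Lra Lia Psatz FunctionalExtensionality ClassicalEpsilon Classical ZArith.
Local Open Scope R_scope.


Lemma sub_ge (phi : nat -> nat) : (forall n, (phi n < phi (S n))%nat) -> forall n, (n <= phi n)%nat.
Proof. intros H n; induction n; [lia| specialize (H n); lia]. Qed.

Lemma sub_mono (phi : nat -> nat) : (forall n, (phi n < phi (S n))%nat) -> forall m n, (m <= n)%nat -> (phi m <= phi n)%nat.
Proof. intros H m n Hmn; induction Hmn; [lia| specialize (H m0); lia]. Qed.

Lemma cv_sub (u : nat -> R) l (phi : nat -> nat) : Un_cv u l -> (forall n, (phi n < phi (S n))%nat) ->
  Un_cv (fun n => u (phi n)) l.
Proof.
intros Hu Hp e ep; destruct (Hu e ep) as [N HN]; exists N; intros n Hn.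
apply HN; pose proof (sub_ge phi Hp n); lia.
Qed.

Lemma cv_const c : Un_cv (fun _ => c) c.
Proof. intros e ep; exists 0%nat; intros; unfold Rdist; rewrite Rminus_diag, Rabs_R0; lra. Qed.

Lemma lim_ge0 (u : nat -> R) l : (forall n, 0 <= u n) -> Un_cv u l -> 0 <= l.
Proof.
intros H Hu; apply Rnot_lt_le; intro Hl.
destruct (Hu (- l) ltac:(lra)) as [N HN]; specialize (HN N (le_n _)); specialize (H N).
unfold Rdist in HN; revert HN; split_Rabs; lra.
Qed.

Lemma squeeze0 (u v : nat -> R) : (forall n, 0 <= u n <= v n) -> Un_cv v 0 -> Un_cv u 0.
Proof.
intros H Hv e ep; destruct (Hv e ep) as [N HN]; exists N; intros n Hn.
specialize (HN n Hn); specialize (H n); unfold Rdist in *; revert HN; split_Rabs; lra.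
Qed.

Lemma cv_sqrt0 (u : nat -> R) : (forall n, 0 <= u n) -> Un_cv (fun n => u n ^ 2) 0 -> Un_cv u 0.
Proof.
intros H Hu e ep; destruct (Hu (e^2) ltac:(nra)) as [N HN]; exists N; intros n Hn.
specialize (HN n Hn); specialize (H n); unfold Rdist in *; revert HN.
rewrite Rminus_0_r, Rminus_0_r, Rabs_pos_eq by nra; rewrite Rabs_pos_eq by lra.
intro; nra.
Qed.

Lemma cv_scal0 (u : nat -> R) c : 0 < c -> Un_cv (fun n => c * u n) 0 -> Un_cv u 0.
Proof.
intros cp Hu e ep; destruct (Hu (c * e) ltac:(nra)) as [N HN]; exists N; intros n Hn.
specialize (HN n Hn); unfold Rdist in *; revert HN.
rewrite !Rminus_0_r, Rabs_mult, (Rabs_pos_eq c) by lra; intro; nra.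
Qed.

Lemma summable_cv0 (e : nat -> R) s : infinite_sum e s -> Un_cv e 0.
Proof.
intros H ee eep; destruct (H (ee/2) ltac:(lra)) as [N HN]; exists (S N); intros n Hn.
destruct n as [|n]; [lia|].
pose proof (HN (S n) ltac:(lia)) as h1; pose proof (HN n ltac:(lia)) as h2.
simpl in h1; unfold Rdist in *; revert h1 h2; split_Rabs; lra.
Qed.

Lemma psum_le (e : nat -> R) s : (forall n, 0 <= e n) -> infinite_sum e s -> forall n, sum_f_R0 e n <= s.
Proof.
intros H0 H n; apply (growing_ineq (sum_f_R0 e)).
- intro m; simpl; specialize (H0 (S m)); lra.
- exact H.
Qed.

Lemma quasi_fejer (a e : nat -> R) s : (forall n, 0 <= a n) -> (forall n, 0 <= e n) ->
  infinite_sum e s -> (forall n, a (S n) <= a n + e n) ->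
  (exists l, Un_cv a l) /\ (forall n, a n <= a 0%nat + s).
Proof.
intros Ha He Hs Hstep.
set (b := fun n => a n - sum_f_R0 e n + e n).
assert (bdec : forall n, b (S n) <= b n).
{ intro n; unfold b; simpl; specialize (Hstep n); lra. }
assert (ble : forall n, b n <= b 0%nat).
{ induction n; [lra| specialize (bdec n); lra]. }
assert (b0 : b 0%nat = a 0%nat) by (unfold b; simpl; ring).
assert (bge : forall n, - s <= b n).
{ intro n; unfold b; pose proof (psum_le e s He Hs n); specialize (Ha n); specialize (He n); lra. }
split.
- assert (Hg : Un_growing (opp_seq b)) by (intro n; unfold opp_seq; specialize (bdec n); lra).
  assert (Hub : has_ub (opp_seq b)).
  { exists s; intros x [i ->]; unfold opp_seq; specialize (bge i); lra. }
  destruct (growing_cv _ Hg Hub) as [l Hl].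
  exists (- l + s - 0).
  assert (Hb : Un_cv b (- l)).
  { intros ee eep; destruct (Hl ee eep) as [N HN]; exists N; intros n Hn; specialize (HN n Hn);
    unfold Rdist, opp_seq in *; revert HN; split_Rabs; lra. }
  assert (Hc : Un_cv (fun n => b n + sum_f_R0 e n - e n) (- l + s - 0)).
  { apply CV_minus; [apply CV_plus; [exact Hb| exact Hs]| exact (summable_cv0 e s Hs)]. }
  intros ee eep; destruct (Hc ee eep) as [N HN]; exists N; intros n Hn; specialize (HN n Hn).
  replace (a n) with (b n + sum_f_R0 e n - e n) by (unfold b; ring); exact HN.
- intro n; specialize (ble n); rewrite b0 in ble; unfold b in ble.
  pose proof (psum_le e s He Hs n); specialize (He n); lra.
Qed.

Lemma BW1 (u : nat -> R) B : (forall n, Rabs (u n) <= B) ->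
  exists phi : nat -> nat, (forall n, (phi n < phi (S n))%nat) /\ exists l, Un_cv (fun n => u (phi n)) l.
Proof.
intro HB.
destruct (Bolzano_Weierstrass u (fun c => -B <= c <= B) (compact_P3 (-B) B)) as [l Hl].
{ intro n; specialize (HB n); revert HB; split_Rabs; lra. }
assert (Hch : forall N k : nat, exists p, (N <= p)%nat /\ Rabs (u p - l) < / INR (S k)).
{ intros N k.
  assert (pos : 0 < / INR (S k)) by (apply Rinv_0_lt_compat, lt_0_INR; lia).
  destruct (Hl (fun y => Rabs (y - l) < / INR (S k)) N) as [p [Hp Hv]].
  - exists (mkposreal _ pos); intros y Hy; exact Hy.
  - exists p; split; assumption. }
set (ch := fun N k => proj1_sig (constructive_indefinite_description _ (Hch N k))).
assert (chP : forall N k, (N <= ch N k)%nat /\ Rabs (u (ch N k) - l) < / INR (S k)).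
{ intros N k; unfold ch; destruct (constructive_indefinite_description _ (Hch N k)); simpl; assumption. }
set (phi := fix phi n := match n with O => ch O O | S m => ch (S (phi m)) (S m) end).
exists phi; split.
- intro n; simpl; destruct (chP (S (phi n)) (S n)); lia.
- exists l; intros e ep.
  destruct (archimed (/ e)) as [Ha _].
  assert (Hz : (0 <= up (/ e))%Z).
  { apply le_IZR; pose proof (Rinv_0_lt_compat e ep); lra. }
  exists (Z.to_nat (up (/ e))); intros n Hn.
  assert (Hp : Rabs (u (phi n) - l) < / INR (S n)).
  { destruct n; simpl; [exact (proj2 (chP O O))| exact (proj2 (chP _ _))]. }
  unfold Rdist; apply (Rlt_le_trans _ _ _ Hp).
  assert (INR (Z.to_nat (up (/ e))) = IZR (up (/ e))) by (rewrite INR_IZR_INZ, Z2Nat.id; auto).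
  assert (/ e < INR (S n)).
  { rewrite S_INR; apply le_INR in Hn; lra. }
  rewrite <- (Rinv_inv e).
  apply Rlt_le, Rinv_lt_contravar; [apply Rmult_lt_0_compat; [apply Rinv_0_lt_compat; lra| pose proof (Rinv_0_lt_compat e ep); lra]| assumption].
Qed.

From mathcomp Require Import all_boot all_fingroup.
Local Open Scope R_scope.

HB.instance Definition _ := Monoid.isComLaw.Build R R0 Rplus (fun a b c => esym (Rplus_assoc a b c)) Rplus_comm Rplus_0_l.

Set Implicit Arguments.
Unset Strict Implicit.
Section Rsum.
Variable T : finType.
Implicit Types f g h u v : T -> R.

Lemma rsum_ext {f g} : (forall t, f t = g t) -> rsum f = rsum g.
Proof. by move=> H; rewrite /rsum; apply: eq_bigr => t _; apply: H. Qed.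

Lemma rsum_add f g : rsum (fun t => f t + g t) = rsum f + rsum g.
Proof. by rewrite /rsum big_split. Qed.

Lemma rsum_scal c f : rsum (fun t => c * f t) = c * rsum f.
Proof.
rewrite /rsum; apply: (big_rec2 (fun a b => a = c * b)); first by ring.
by move=> t a b _ ->; ring.
Qed.

Lemma rsum0 : rsum (fun _ : T => 0) = 0.
Proof. by rewrite /rsum big1. Qed.

Lemma rsum_le {f g} : (forall t, f t <= g t) -> rsum f <= rsum g.
Proof.
move=> H; rewrite /rsum; apply: (big_rec2 (fun a b => a <= b)); first lra.
by move=> t a b _ Hab; have := H t; lra.
Qed.

Lemma rsum_ge0 f : (forall t, 0 <= f t) -> 0 <= rsum f.
Proof. by move=> H; rewrite -rsum0; apply: rsum_le. Qed.

Lemma rsum_abs f : Rabs (rsum f) <= rsum (fun t => Rabs (f t)).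
Proof.
rewrite /rsum; apply: (big_rec2 (fun a b => Rabs a <= b)); first by rewrite Rabs_R0; lra.
move=> t a b _ Hab; have := Rabs_triang (f t) a; lra.
Qed.

Lemma rsum_term {f} a : (forall t, 0 <= f t) -> f a <= rsum f.
Proof.
move=> H; rewrite /rsum (bigD1 a) //=.
have : 0 <= \big[Rplus/R0]_(i | i != a) f i.
  apply: (big_ind (fun x => 0 <= x)) => //; [lra | move=> *; lra].
lra.
Qed.

Lemma rsum_lin3 a b c f g h :
  rsum (fun t => a * f t + b * g t + c * h t) = a * rsum f + b * rsum g + c * rsum h.
Proof. by rewrite !rsum_add !rsum_scal. Qed.

Lemma rsum_sub f g : rsum (fun t => f t - g t) = rsum f - rsum g.
Proof.
rewrite (rsum_ext (g := fun t => f t + (-1) * g t)); last by move=> t; ring.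
by rewrite rsum_add rsum_scal; ring.
Qed.

Definition ip (u v : T -> R) := rsum (fun t => u t * v t).
Definition nsq (u : T -> R) := rsum (fun t => (u t)^2).

Lemma nsq_ge0 u : 0 <= nsq u.
Proof. by apply: rsum_ge0 => t; apply: pow2_ge_0. Qed.

Lemma nrm_ge0 u : 0 <= nrm u.
Proof. exact: sqrt_pos. Qed.

Lemma nrm_sq u : (nrm u)^2 = nsq u.
Proof. by rewrite /nrm pow2_sqrt //; apply: nsq_ge0. Qed.

Lemma nrmE u : nrm u = sqrt (nsq u).
Proof. by []. Qed.

Lemma coord_le_nrm u a : Rabs (u a) <= nrm u.
Proof.
rewrite /nrm -sqrt_Rsqr_abs; apply: sqrt_le_1_alt.
rewrite Rsqr_pow2.
by apply: (rsum_term (f := fun t => u t ^ 2)) => t; apply: pow2_ge_0.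
Qed.

Lemma nsq_lin u v k : nsq (fun t => u t + k * v t) = nsq u + 2 * k * ip u v + k^2 * nsq v.
Proof.
rewrite /nsq /ip -(Rmult_1_l (rsum (fun t => u t ^ 2))) -rsum_lin3.
by apply: rsum_ext => t; ring.
Qed.

Lemma CS_sq u v : (ip u v)^2 <= nsq u * nsq v.
Proof.
have [B0|Bp] : nsq v = 0 \/ 0 < nsq v by have := nsq_ge0 v; lra.
- have Hv : forall t, v t = 0.
    move=> t; have := rsum_term (f := fun t => v t ^ 2) t (fun t => pow2_ge_0 (v t)).
    rewrite -/(nsq v) B0 => h; have := pow2_ge_0 (v t); nra.
  rewrite /ip (rsum_ext (g := fun _ => 0)) ?rsum0; last by move=> t; rewrite Hv; ring.
  rewrite B0; lra.
- have := nsq_ge0 (fun t => u t + (- (ip u v / nsq v)) * v t).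
  rewrite nsq_lin => h.
  have e : nsq u + 2 * - (ip u v / nsq v) * ip u v + (- (ip u v / nsq v)) ^ 2 * nsq v
           = nsq u - (ip u v)^2 / nsq v by field; lra.
  rewrite e in h.
  have h2 : (ip u v)^2 / nsq v <= nsq u by lra.
  have := Rmult_le_compat_r (nsq v) _ _ (Rlt_le _ _ Bp) h2.
  have -> : ip u v ^ 2 / nsq v * nsq v = ip u v ^ 2 by field; lra.
  lra.
Qed.

Lemma CS u v : ip u v <= nrm u * nrm v.
Proof.
apply: Rle_trans (Rle_abs _) _.
rewrite /nrm -sqrt_mult; [|exact: nsq_ge0|exact: nsq_ge0].
rewrite -sqrt_Rsqr_abs; apply: sqrt_le_1_alt; rewrite Rsqr_pow2.
exact: CS_sq.
Qed.

Lemma nrm_tri u v : nrm (fun t => u t + v t) <= nrm u + nrm v.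
Proof.
have e : (fun t => u t + v t) = (fun t => u t + 1 * v t) by apply: functional_extensionality => t; ring.
rewrite e !nrmE nsq_lin.
rewrite -(sqrt_pow2 (sqrt (nsq u) + sqrt (nsq v))); last by have := nrm_ge0 u; have := nrm_ge0 v; rewrite !nrmE; lra.
apply: sqrt_le_1_alt.
have := CS u v; rewrite !nrmE => h.
have -> : (sqrt (nsq u) + sqrt (nsq v)) ^ 2 = sqrt (nsq u) ^2 + sqrt (nsq v)^2 + 2 * (sqrt (nsq u) * sqrt (nsq v)) by ring.
rewrite !pow2_sqrt; [|exact: nsq_ge0|exact: nsq_ge0].
lra.
Qed.

Lemma nrm_scal c u : nrm (fun t => c * u t) = Rabs c * nrm u.
Proof.
rewrite /nrm /nsq (rsum_ext (g := fun t => c^2 * u t ^ 2)); last by move=> t; ring.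
rewrite rsum_scal sqrt_mult; [|exact: pow2_ge_0|exact: nsq_ge0].
by rewrite -(pow2_abs c) sqrt_pow2 //; apply: Rabs_pos.
Qed.

Lemma nrm_le_sum u : nrm u <= rsum (fun t => Rabs (u t)).
Proof.
set S := rsum _.
have S0 : 0 <= S by apply: rsum_ge0 => t; apply: Rabs_pos.
rewrite -(sqrt_pow2 S S0); apply: sqrt_le_1_alt.
have -> : S ^ 2 = rsum (fun t => S * Rabs (u t)) by rewrite rsum_scal; rewrite /S; ring.
apply: rsum_le => t.
have h := rsum_term (f := fun t => Rabs (u t)) t (fun t => Rabs_pos (u t)).
rewrite -pow2_abs; have := Rabs_pos (u t); rewrite -/S in h; nra.
Qed.

Lemma close_nrm rho : 0 < rho -> exists del, 0 < del /\
  forall q w : T -> R, (forall b, Rabs (q b - w b) < del) -> nrm (vsub q w) < rho.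
Proof.
move=> Hr; set K := rsum (fun _ : T => 1).
have K0 : 0 <= K by apply: rsum_ge0 => _; lra.
exists (rho / (K + 1)); split; first by apply: Rdiv_lt_0_compat; lra.
move=> q w H; apply: Rle_lt_trans (nrm_le_sum _) _.
apply: Rle_lt_trans (rsum_le (g := fun _ => rho / (K+1) * 1) _) _.
  by move=> t; have := H t; rewrite /vsub; lra.
rewrite rsum_scal -/K.
have -> : rho / (K + 1) * K = rho * (K / (K+1)) by field; lra.
have : K / (K+1) < 1.
  have -> : K / (K+1) = 1 - 1/(K+1) by field; lra.
  have : 0 < 1/(K+1) by apply: Rdiv_lt_0_compat; lra.
  lra.
nra.
Qed.

End Rsum.
Unset Implicit Arguments.
Set Strict Implicit.


Section Estimate.
Variables (T : finType) (g : (T -> R) -> R) (Dg : T -> (T -> R) -> R) (O : (T -> R) -> Prop).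
Hypothesis Oopen : open_prof O.
Hypothesis Hpar : forall a y, O y -> partial g a y (Dg a y).
Hypothesis Hcont : forall a, cont_on O (Dg a).

Lemma upd_upd (p : T -> R) a c t : upd (upd p a c) a t = upd p a t.
Proof. by apply: functional_extensionality => b; rewrite /upd; case: (b == a). Qed.

Lemma upd_at (p : T -> R) a c : upd p a c a = c.
Proof. by rewrite /upd eqxx. Qed.

Lemma mvt_step (p : T -> R) a al be K e :
  (forall c, Rmin al be <= c <= Rmax al be -> O (upd p a c) /\ Rabs (Dg a (upd p a c) - K) <= e) ->
  Rabs (g (upd p a be) - g (upd p a al) - K * (be - al)) <= e * Rabs (be - al).
Proof.
move=> H.
have Hd : forall c, Rmin al be <= c <= Rmax al be ->
   derivable_pt_lim (fun t => g (upd p a t) - K * t) c (Dg a (upd p a c) - K * 1).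
  move=> c Hc; have [Oc _] := H c Hc.
  apply: (derivable_pt_lim_minus (fun t => g (upd p a t)) (fun t => K * t)).
  + have := Hpar a _ Oc; rewrite /partial upd_at.
    by have -> : (fun t => g (upd (upd p a c) a t)) = (fun t => g (upd p a t)) by apply: functional_extensionality => t; rewrite upd_upd.
  + apply: (derivable_pt_lim_scal id K c 1); exact: derivable_pt_lim_id.
have [c [Hc Hin]] := MVT_abs _ _ al be Hd.
have -> : g (upd p a be) - g (upd p a al) - K * (be - al) =
          (g (upd p a be) - K * be) - (g (upd p a al) - K * al) by ring.
rewrite Hc Rmult_1_r; apply: Rmult_le_compat_r; first exact: Rabs_pos.
by case: (H c Hin).
Qed.


Definition restr (s : seq T) (v : T -> R) := fun a => if a \in s then v a else 0.
Definition padd (w v : T -> R) := fun a => w a + v a.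

Lemma E_list {s : seq T} : uniq s -> forall w, O w -> forall e, 0 < e ->
  exists del, 0 < del /\ forall v, (forall a, Rabs (v a) < del) ->
  Rabs (g (padd w (restr s v)) - g w - \big[Rplus/R0]_(a <- s) (Dg a w * v a))
    <= e * \big[Rplus/R0]_(a <- s) Rabs (v a).
Proof.
elim: s => [|a s IH].
  move=> _ w Ow e ep; exists 1; split; first lra.
  move=> v _; rewrite !big_nil.
  have -> : padd w (restr [::] v) = w by apply: functional_extensionality => b; rewrite /padd /restr in_nil; ring.
  rewrite Rmult_0_r; have -> : g w - g w - 0 = 0 by ring.
  rewrite Rabs_R0; lra.
move=> /= /andP [nas us] w Ow e ep.
have [del1 [d1p H1]] := IH us w Ow e ep.
have [r [rp Hr]] := Oopen w Ow.
have [del2 [d2p H2]] := close_nrm T rp.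
have [del3 [d3p H3]] := Hcont a w Ow e ep.
have [del4 [d4p H4]] := close_nrm T d3p.
exists (Rmin del1 (Rmin del2 del4)); split.
  by apply: Rmin_pos => //; apply: Rmin_pos.
move=> v Hv.
have Hv1 : forall b, Rabs (v b) < del1 by move=> b; have := Hv b; have := Rmin_l del1 (Rmin del2 del4); lra.
have Hv2 : forall b, Rabs (v b) < del2.
  by move=> b; have := Hv b; have := Rmin_r del1 (Rmin del2 del4); have := Rmin_l del2 del4; lra.
have Hv4 : forall b, Rabs (v b) < del4.
  by move=> b; have := Hv b; have := Rmin_r del1 (Rmin del2 del4); have := Rmin_r del2 del4; lra.
set p := padd w (restr s v).
have pa : p a = w a by rewrite /p /padd /restr (negbTE nas); ring.
have eq1 : padd w (restr (a :: s) v) = upd p a (w a + v a).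
  apply: functional_extensionality => b; rewrite /upd /p /padd /restr inE.
  by case: (b == a) / eqP => [->|_] //=.
have eq2 : upd p a (w a) = p.
  by apply: functional_extensionality => b; rewrite /upd; case: (b == a) / eqP => [->|_].
have Hst := mvt_step p a (w a) (w a + v a) (Dg a w) e.
have Hst' : Rabs (g (upd p a (w a + v a)) - g (upd p a (w a)) - Dg a w * (w a + v a - w a))
            <= e * Rabs (w a + v a - w a).
  apply: Hst => c Hc.
  have Hq : forall b, Rabs (upd p a c b - w b) <= Rabs (v b).
    move=> b; rewrite /upd; case: (b == a) / eqP => [->|_].
    - have : Rmin (w a) (w a + v a) <= c <= Rmax (w a) (w a + v a) by [].
      rewrite /Rmin /Rmax; destruct (Rle_dec (w a) (w a + v a)) => h;
        split_Rabs; lra.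
    - rewrite /p /padd /restr; case: (b \in s).
      + have -> : w b + v b - w b = v b by ring.
        lra.
      + rewrite Rplus_0_r Rminus_diag Rabs_R0; exact: Rabs_pos.
  have Oc : O (upd p a c).
    apply: Hr; apply: H2 => b; have := Hq b; have := Hv2 b; lra.
  split => //; apply: Rlt_le; apply: H3 => //; apply: H4 => b; have := Hq b; have := Hv4 b; lra.
rewrite eq2 in Hst'.
have HI := H1 v Hv1.
rewrite eq1 !big_cons -/p.
rewrite (_ : w a + v a - w a = v a) in Hst'; last by ring.
set S1 := \big[Rplus/R0]_(j <- s) (Dg j w * v j) in HI *.
set S2 := \big[Rplus/R0]_(j <- s) Rabs (v j) in HI *.
have -> : g (upd p a (w a + v a)) - g w - (Dg a w * v a + S1) =
   (g (upd p a (w a + v a)) - g p - Dg a w * v a) + (g p - g w - S1) by ring.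
apply: Rle_trans (Rabs_triang _ _) _.
move: HI Hst'; set X := g (upd p a (w a + v a)); set Y := g p; have := Rabs_pos (v a); move=> *; rewrite Rmult_plus_distr_l; lra.
Qed.

Lemma E_full w : O w -> forall e, 0 < e ->
  exists del, 0 < del /\ forall v, (forall a, Rabs (v a) < del) ->
  Rabs (g (fun a => w a + v a) - g w - rsum (fun a => Dg a w * v a))
    <= e * rsum (fun a => Rabs (v a)).
Proof.
move=> Ow e ep; have [del [dp H]] := E_list (index_enum_uniq T) w Ow e ep.
exists del; split => // v Hv; have := H v Hv.
have -> : padd w (restr (index_enum T) v) = (fun a => w a + v a).
  by apply: functional_extensionality => b; rewrite /padd /restr mem_index_enum.
by [].
Qed.

End Estimate.


Lemma sum_Idx {N : nat} {d : 'I_N -> nat} (H : Idx d -> R) :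
  rsum H = \big[Rplus/R0]_(j : 'I_N) rsum (fun k : 'I_(d j) => H (coord k)).
Proof.
rewrite /rsum (sig_big_dep (fun _ => true) (fun _ _ => true) (fun i k => H (coord k))) /=.
by apply: eq_bigr => -[i k] _.
Qed.

Lemma blk_sum {N : nat} {d : 'I_N -> nat} (i : 'I_N) (G : Idx d -> R) :
  rsum (fun k : 'I_(d i) => G (coord k)) = rsum (fun a : Idx d => if tag a == i then G a else 0).
Proof.
rewrite (sum_Idx (fun a : Idx d => if tag a == i then G a else 0)) (bigD1 i) //=.
rewrite big1 ?Rplus_0_r.
  by apply: eq_bigr => k _; rewrite eqxx.
move=> j /negbTE ji; rewrite /rsum big1 // => k _; by rewrite /= ji.
Qed.

Lemma ind_sum {N : nat} {d : 'I_N -> nat} (X : Idx d -> R) :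
  \big[Rplus/R0]_(i : 'I_N) rsum (fun a : Idx d => if tag a == i then X a else 0) = rsum X.
Proof.
rewrite /rsum exchange_big; apply: eq_bigr => a _.
rewrite -big_mkcond (big_pred1 (tag a)) //= => i; by rewrite eq_sym.
Qed.

Lemma small_t V H C : 0 <= H ->
  (forall e, 0 < e -> exists t0, 0 < t0 /\ forall t, 0 < t <= t0 -> 0 <= t*V + e*t*H + t^2*C) -> 0 <= V.
Proof.
move=> H0 Hyp; apply: Rnot_lt_le => Vn.
have ep : 0 < - V / (2 * (H + 1)) by apply: Rdiv_lt_0_compat; lra.
have [t0 [t0p Ht]] := Hyp _ ep.
set t := Rmin t0 (- V / (2 * (Rabs C + 1))).
have tp : 0 < t by apply: Rmin_pos => //; apply: Rdiv_lt_0_compat; have := Rabs_pos C; lra.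
have tle : t <= t0 by apply: Rmin_l.
have := Ht t (conj tp tle).
have h1 : - V / (2 * (H + 1)) * H < - V / 2.
  have -> : - V / (2 * (H + 1)) * H = (- V / 2) * (H / (H+1)) by field; lra.
  have : H / (H+1) < 1.
    have -> : H / (H+1) = 1 - 1/(H+1) by field; lra.
    have : 0 < 1/(H+1) by apply: Rdiv_lt_0_compat; lra.
    lra.
  nra.
have h2 : t * C < - V / 2.
  have t2 : t <= - V / (2 * (Rabs C + 1)) by apply: Rmin_r.
  have : t * C <= t * Rabs C by apply: Rmult_le_compat_l; [lra| apply: Rle_abs].
  have : t * Rabs C <= - V / (2 * (Rabs C + 1)) * Rabs C by apply: Rmult_le_compat_r; [apply: Rabs_pos|lra].
  have -> : - V / (2 * (Rabs C + 1)) * Rabs C = (- V / 2) * (Rabs C / (Rabs C+1)) by field; have := Rabs_pos C; lra.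
  have : Rabs C / (Rabs C+1) < 1.
    have -> : Rabs C / (Rabs C+1) = 1 - 1/(Rabs C+1) by field; have := Rabs_pos C; lra.
    have : 0 < 1/(Rabs C+1) by apply: Rdiv_lt_0_compat; have := Rabs_pos C; lra.
    lra.
  nra.
have -> : t * V + - V / (2 * (H + 1)) * t * H + t ^ 2 * C
   = t * (V + - V / (2 * (H + 1)) * H + t * C) by ring.
move=> h; have : 0 <= V + - V / (2 * (H + 1)) * H + t * C.
  by apply: (Rmult_le_reg_l t); lra.
lra.
Qed.

Lemma small_e X H : 0 <= H -> (forall e, 0 < e -> - (e * H) <= X) -> 0 <= X.
Proof.
move=> H0 Hyp; apply: Rnot_lt_le => Xn.
have ep : 0 < - X / (2 * (H + 1)) by apply: Rdiv_lt_0_compat; lra.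
have := Hyp _ ep.
have -> : - X / (2 * (H + 1)) * H = (- X / 2) * (H / (H+1)) by field; lra.
have : H / (H+1) < 1.
  have -> : H / (H+1) = 1 - 1/(H+1) by field; lra.
  have : 0 < 1/(H+1) by apply: Rdiv_lt_0_compat; lra.
  lra.
have : 0 <= H / (H+1) by apply: Rmult_le_pos; [lra|apply: Rlt_le; apply: Rinv_0_lt_compat; lra].
nra.
Qed.


Section Game.
Variables (N : nat) (d : 'I_N -> nat) (Q : forall i : 'I_N, ('I_(d i) -> R) -> Prop)
  (f : 'I_N -> profile d -> R) (O : profile d -> Prop) (D1 : 'I_N -> Idx d -> profile d -> R).
Hypothesis HQconv : forall i, convex_blk (Q i).
Hypothesis Hfconv : forall i (y w : profile d) t, inQ Q y -> inQ Q w -> same_off i y w -> 0 <= t <= 1 ->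
     f i (fun a => t * y a + (1 - t) * w a) <= t * f i y + (1 - t) * f i w.
Hypothesis Oopen : open_prof O.
Hypothesis HQO : forall y, inQ Q y -> O y.
Hypothesis Hpar : forall i a y, O y -> partial (f i) a y (D1 i a y).
Hypothesis Hcont : forall i a, cont_on O (D1 i a).

Lemma rsum_abs_scal (T : finType) t (h : T -> R) :
  rsum (fun a => Rabs (t * h a)) = Rabs t * rsum (fun a => Rabs (h a)).
Proof. rewrite -rsum_scal; apply: rsum_ext => a; exact: Rabs_mult. Qed.

Lemma small_dir (h : profile d) del : 0 < del ->
  let Hs := rsum (fun a => Rabs (h a)) in
  forall t, 0 < t <= Rmin 1 (del / (Hs + 1)) -> forall a, Rabs (t * h a) < del.
Proof.
move=> dp Hs t [tp tle] a.
have H0 : 0 <= Hs by apply: rsum_ge0 => b; exact: Rabs_pos.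
have ha : Rabs (h a) <= Hs := rsum_term (f := fun b => Rabs (h b)) a (fun b => Rabs_pos (h b)).
rewrite Rabs_mult (Rabs_pos_eq t); last lra.
have t2 : t <= del / (Hs + 1) by apply: Rle_trans tle (Rmin_r _ _).
have : t * Rabs (h a) <= del / (Hs + 1) * Hs.
  apply: Rmult_le_compat => //; [lra|exact: Rabs_pos].
have -> : del / (Hs + 1) * Hs = del * (Hs / (Hs+1)) by field; lra.
have : Hs / (Hs+1) < 1.
  have -> : Hs / (Hs+1) = 1 - 1/(Hs+1) by field; lra.
  have : 0 < 1/(Hs+1) by apply: Rdiv_lt_0_compat; lra.
  lra.
nra.
Qed.

Lemma tmin_pos del Hs : 0 < del -> 0 <= Hs -> 0 < Rmin 1 (del / (Hs + 1)).
Proof. move=> *; apply: Rmin_pos; [lra|apply: Rdiv_lt_0_compat; lra]. Qed.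

Lemma VI_reg tau (y w : profile d) : isNE Q (reg_costs f tau y) w ->
  forall v, inQ Q v -> 0 <= rsum (fun a => (grad D1 w a + tau * (w a - y a)) * (v a - w a)).
Proof.
move=> [wQ HNE] v vQ.
rewrite -ind_sum; apply: (big_ind (fun x => 0 <= x)); [lra|move=> *; lra|move=> i _].
set h := fun a : Idx d => if tag a == i then v a - w a else 0.
set Hs := rsum (fun a => Rabs (h a)).
have H0 : 0 <= Hs by apply: rsum_ge0 => b; exact: Rabs_pos.
set Bq := rsum (fun a : Idx d => if tag a == i then (v a - w a)^2 else 0).
apply: (small_t _ _ (tau / 2 * Bq) H0) => e ep.
have [del [dp Hdel]] := @E_full _ _ _ _ Oopen (Hpar i) (Hcont i) _ (HQO _ wQ) _ ep.
exists (Rmin 1 (del / (Hs + 1))); split; first exact: tmin_pos.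
move=> t Ht.
have tp : 0 < t by case: Ht.
have t1 : t <= 1 by case: Ht => _ h1; apply: Rle_trans h1 (Rmin_l _ _).
set y' := fun a => w a + t * h a.
have so : same_off i w y'.
  move=> a ta; rewrite /y' /h; case: eqP => // _; ring.
have Qy' : Q i (block y' i).
  have -> : block y' i = (fun k => t * block v i k + (1 - t) * block w i k).
    apply: functional_extensionality => k; rewrite /block /y' /h /= eqxx; ring.
  by apply: HQconv; [apply: vQ|apply: wQ|lra].
have Hc := HNE i y' so Qy'.
have HE := Hdel (fun a => t * h a) (small_dir h del dp t Ht).
rewrite rsum_abs_scal (Rabs_pos_eq t) in HE; last lra.
rewrite -/Hs in HE.
have eL : rsum (fun a => D1 i a w * (t * h a)) =
   t * rsum (fun a => if tag a == i then grad D1 w a * (v a - w a) else 0).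
  rewrite -rsum_scal; apply: rsum_ext => a; rewrite /h /grad; case: eqP => [->|_]; ring.
rewrite eL in HE.
have nw : nrm (vsub (block w i) (block y i)) ^ 2 = rsum (fun a : Idx d => if tag a == i then (w a - y a)^2 else 0).
  by rewrite nrm_sq; apply: (blk_sum i (fun a => (w a - y a)^2)).
have ny : nrm (vsub (block y' i) (block y i)) ^ 2 = rsum (fun a : Idx d => if tag a == i then (y' a - y a)^2 else 0).
  by rewrite nrm_sq; apply: (blk_sum i (fun a => (y' a - y a)^2)).
have ey : rsum (fun a : Idx d => if tag a == i then (y' a - y a)^2 else 0) =
   rsum (fun a : Idx d => if tag a == i then (w a - y a)^2 else 0)
   + 2 * t * rsum (fun a : Idx d => if tag a == i then (w a - y a) * (v a - w a) else 0)
   + t^2 * Bq.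
  rewrite -(Rmult_1_l (rsum (fun a : Idx d => if tag a == i then (w a - y a)^2 else 0))) -rsum_lin3.
  apply: rsum_ext => a; rewrite /y' /h; case: eqP => _; ring.
have eV : rsum (fun a : Idx d => if tag a == i then (grad D1 w a + tau * (w a - y a)) * (v a - w a) else 0)
   = 1 * rsum (fun a => if tag a == i then grad D1 w a * (v a - w a) else 0)
     + tau * rsum (fun a : Idx d => if tag a == i then (w a - y a) * (v a - w a) else 0) + 0 * Bq.
  rewrite -rsum_lin3; apply: rsum_ext => a; case: eqP => _; ring.
rewrite eV.
move: Hc; rewrite /reg_costs nw ny ey.
set L := rsum (fun a => if tag a == i then grad D1 w a * (v a - w a) else 0).
set P := rsum (fun a : Idx d => if tag a == i then (w a - y a) * (v a - w a) else 0).
move=> Hc.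
have h3 : f i y' - f i w - t * L <= e * (t * Hs) by apply: Rle_trans (Rle_abs _) HE.
have -> : t * (1 * L + tau * P + 0 * Bq) + e * t * Hs + t ^ 2 * (tau / 2 * Bq)
  = (t * L + e * (t * Hs)) + tau / 2 * (2 * t * P + t^2 * Bq) .
  field.
set Z := rsum (fun a : Idx d => if tag a == i then (w a - y a) ^ 2 else 0) in Hc.
lra.
Qed.


Lemma VI_NE (p : profile d) : isNE Q f p ->
  forall v, inQ Q v -> 0 <= rsum (fun a => grad D1 p a * (v a - p a)).
Proof.
move=> [pQ HNE] v vQ.
have H : isNE Q (reg_costs f 0 p) p.
  split => // i y so Qy; rewrite /reg_costs.
  have := HNE i y so Qy; have -> : 0 / 2 = 0 by field.
  lra.
have := VI_reg 0 p p H v vQ.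
have -> : rsum (fun a => (grad D1 p a + 0 * (p a - p a)) * (v a - p a)) =
          rsum (fun a => grad D1 p a * (v a - p a)) by apply: rsum_ext => a; ring.
by [].
Qed.

Lemma NE_of_VI (p : profile d) : inQ Q p ->
  (forall v, inQ Q v -> 0 <= rsum (fun a => grad D1 p a * (v a - p a))) -> isNE Q f p.
Proof.
move=> pQ HVI; split => // i y' so Qy.
have y'Q : inQ Q y'.
  move=> j; case: (eqVneq j i) => [->//|ji].
  have -> : block y' j = block p j.
    by apply: functional_extensionality => k; rewrite /block so //= => e; move: ji; rewrite e eqxx.
  exact: pQ.
set h := fun a => y' a - p a.
have HL := HVI y' y'Q.
set L := rsum (fun a => grad D1 p a * (y' a - p a)) in HL.
set Hs := rsum (fun a => Rabs (h a)).
have H0 : 0 <= Hs by apply: rsum_ge0 => b; exact: Rabs_pos.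
suff : 0 <= f i y' - f i p by lra.
apply: (small_e _ _ H0) => e ep.
have [del [dp Hdel]] := @E_full _ _ _ _ Oopen (Hpar i) (Hcont i) _ (HQO _ pQ) _ ep.
set t := Rmin 1 (del / (Hs + 1)).
have tp : 0 < t := tmin_pos _ _ dp H0.
have t1 : t <= 1 by apply: Rmin_l.
have HE := Hdel (fun a => t * h a) (small_dir h del dp t (conj tp (Rle_refl _))).
rewrite rsum_abs_scal (Rabs_pos_eq t) in HE; last lra.
rewrite -/Hs in HE.
have eL : rsum (fun a => D1 i a p * (t * h a)) = t * L.
  rewrite /L -rsum_scal; apply: rsum_ext => a; rewrite /h /grad.
  case: (eqVneq (tag a) i) => [->|ta]; first by ring.
  rewrite so; [ring|by move=> e'; move: ta; rewrite e' eqxx].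
rewrite eL in HE.
have Hcv := Hfconv i y' p t y'Q pQ (fun a ta => esym (so a ta)) (conj (Rlt_le _ _ tp) t1).
have ef : (fun a => t * y' a + (1 - t) * p a) = (fun a => p a + t * h a).
  by apply: functional_extensionality => a; rewrite /h; ring.
rewrite ef in Hcv.
have h3 : t * L - e * (t * Hs) <= f i (fun a => p a + t * h a) - f i p.
  by move: HE; split_Rabs; lra.
have : t * (- (e * Hs)) <= t * (f i y' - f i p) by nra.
move=> h4; apply: (Rmult_le_reg_l t) => //.
Qed.

End Game.


Lemma cv_rsum {T : finType} (s : nat -> T -> R) (l : T -> R) :
  (forall a, Un_cv (fun n => s n a) (l a)) -> Un_cv (fun n => rsum (s n)) (rsum l).
Proof.
move=> H; rewrite /rsum; elim: (index_enum T) => [|a r IH].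
  rewrite big_nil.
  have -> : (fun n => \big[Rplus/R0]_(a <- [::]) s n a) = (fun _ => 0)
    by apply: functional_extensionality => n; rewrite big_nil.
  exact: cv_const.
rewrite big_cons.
have -> : (fun n => \big[Rplus/R0]_(b <- a :: r) s n b) = (fun n => s n a + \big[Rplus/R0]_(b <- r) s n b)
  by apply: functional_extensionality => n; rewrite big_cons.
exact: CV_plus.
Qed.

Lemma BWn {T : finType} (u : nat -> T -> R) : (forall a, exists B, forall n, Rabs (u n a) <= B) ->
  exists phi : nat -> nat, (forall n, (phi n < phi n.+1)%coq_nat) /\
    exists xb : T -> R, forall a, Un_cv (fun n => u (phi n) a) (xb a).
Proof.
move=> HB.
suff : forall r : seq T, exists phi : nat -> nat, (forall n, (phi n < phi n.+1)%coq_nat) /\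
    exists xb : T -> R, forall a, a \in r -> Un_cv (fun n => u (phi n) a) (xb a).
  move/(_ (index_enum T)) => [phi [Hp [xb Hx]]]; exists phi; split => //; exists xb => a.
  exact: Hx (mem_index_enum a).
elim => [|a r [phi [Hp [xb Hx]]]].
  exists id; split; first by move=> n; apply/leP.
  by exists (fun _ => 0) => a; rewrite in_nil.
have [B HBa] := HB a.
have [psi [Hpsi [la Hla]]] := BW1 (fun n => u (phi n) a) B (fun n => HBa (phi n)).
exists (fun n => phi (psi n)); split.
  move=> n; have := Hpsi n; have := sub_mono phi Hp (psi n).+1 (psi n.+1); move: (Hp (psi n)); lia.
exists (fun b => if b == a then la else xb b) => b; rewrite inE; case: eqP => [-> _|_ /= br].
  exact: Hla.
exact: (cv_sub (fun n => u (phi n) b) (xb b) psi (Hx b br) Hpsi).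
Qed.

Lemma coord_cv_nrm {T : finType} (u : nat -> T -> R) xb :
  (forall a, Un_cv (fun n => u n a) (xb a)) -> Un_cv (fun n => nrm (vsub (u n) xb)) 0.
Proof.
move=> H.
apply: (squeeze0 _ (fun n => rsum (fun a => Rabs (u n a - xb a)))).
  move=> n; split; first exact: nrm_ge0.
  exact: nrm_le_sum.
have -> : 0 = rsum (fun a : T => Rabs 0) by rewrite Rabs_R0 rsum0.
apply: cv_rsum => a; apply: cv_cvabs.
have := CV_minus _ _ _ _ (H a) (cv_const (xb a)); by rewrite Rminus_diag.
Qed.

Lemma nrm_cv_coord {T : finType} (u : nat -> T -> R) xb :
  Un_cv (fun n => nrm (vsub (u n) xb)) 0 -> forall a, Un_cv (fun n => u n a) (xb a).
Proof.
move=> H a e ep; have [N HN] := H e ep; exists N => n Hn; have := HN n Hn.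
rewrite /Rdist Rminus_0_r (Rabs_pos_eq (nrm _)); last exact: nrm_ge0.
have := coord_le_nrm (vsub (u n) xb) a; rewrite /vsub; lra.
Qed.

Lemma cont_seq {T : finType} (O : (T -> R) -> Prop) (h : (T -> R) -> R) (y : nat -> T -> R) xb :
  cont_on O h -> O xb -> (forall n, O (y n)) -> Un_cv (fun n => nrm (vsub (y n) xb)) 0 ->
  Un_cv (fun n => h (y n)) (h xb).
Proof.
move=> Hc Ox Oy Hy e ep; have [del [dp Hd]] := Hc xb Ox e ep.
have [N HN] := Hy del dp; exists N => n Hn.
apply: Hd => //; have := HN n Hn; rewrite /Rdist Rminus_0_r Rabs_pos_eq //; exact: nrm_ge0.
Qed.


Lemma key_ineq {T : finType} (F : (T -> R) -> T -> R) tau (x w p : T -> R) : 0 < tau ->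
  0 <= rsum (fun a => (F w a + tau * (w a - x a)) * (p a - w a)) ->
  0 <= rsum (fun a => F p a * (w a - p a)) ->
  0 <= rsum (fun a => (F w a - F p a) * (w a - p a)) ->
  nsq (vsub w p) + nsq (vsub x w) <= nsq (vsub x p).
Proof.
move=> tp H1 H2 H3.
set S := rsum (fun a => (x a - w a) * (w a - p a)).
have e1 : rsum (fun a => (F w a + tau * (w a - x a)) * (p a - w a)) + rsum (fun a => F p a * (w a - p a))
   + rsum (fun a => (F w a - F p a) * (w a - p a)) = tau * S.
  rewrite -!rsum_add -rsum_scal; apply: rsum_ext => a; ring.
have S0 : 0 <= S by apply: (Rmult_le_reg_l tau); lra.
have e2 : nsq (vsub x p) = nsq (vsub w p) + nsq (vsub x w) + 2 * S.
  rewrite /nsq /S -!rsum_add -rsum_scal -rsum_add; apply: rsum_ext => a; rewrite /vsub; ring.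
lra.
Qed.

Lemma nrm_vsub_sym {T : finType} (u v : T -> R) : nrm (vsub u v) = nrm (vsub v u).
Proof. by rewrite /nrm /nsq; congr sqrt; apply: rsum_ext => a; rewrite /vsub; ring. Qed.

Lemma step_ineq {T : finType} (x w z p : T -> R) et ep Rm RM :
  0 < Rm -> Rm <= et <= RM -> RM < 2 -> nrm (vsub z w) <= ep ->
  nsq (vsub w p) + nsq (vsub x w) <= nsq (vsub x p) ->
  nrm (vsub (fun a => (1 - et) * x a + et * z a) p) <= nrm (vsub x p) + 2 * ep /\
  Rm * (2 - RM) * nrm (vsub x w) ^ 2 <=
    nrm (vsub x p) ^ 2 - nrm (vsub (fun a => (1 - et) * x a + et * z a) p) ^ 2
    + 4 * ep * nrm (vsub x p) + 4 * ep ^ 2.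
Proof.
move=> Rmp [H1 H2] RM2 Hz K.
set u := fun a => (1 - et) * x a + et * w a.
have eU : nsq (vsub u p) = (1 - et) * nsq (vsub x p) + et * nsq (vsub w p) - et * (1 - et) * nsq (vsub x w).
  rewrite /nsq (rsum_ext (g := fun a => (1 - et) * (vsub x p a)^2 + et * (vsub w p a)^2
      + (- (et * (1 - et))) * (vsub x w a)^2)).
    by rewrite rsum_lin3; ring.
  by move=> a; rewrite /vsub /u; ring.
have cb : Rm * (2 - RM) <= et * (2 - et) by nra.
have Ule : nsq (vsub u p) <= nsq (vsub x p) - et * (2 - et) * nsq (vsub x w).
  rewrite eU; have := nsq_ge0 (vsub x w); nra.
have ep0 : 0 <= ep by have := nrm_ge0 (vsub z w); lra.
have UD : nrm (vsub u p) <= nrm (vsub x p).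
  have e2 : 0 <= et * (2 - et) by nra.
  rewrite !nrmE; apply: sqrt_le_1_alt; have := nsq_ge0 (vsub x w); move: Ule; set Q1 := nsq _; set Q2 := nsq _; set Q3 := nsq _; nra.
have ex : vsub (fun a => (1 - et) * x a + et * z a) p = (fun a => vsub u p a + et * vsub z w a).
  by apply: functional_extensionality => a; rewrite /vsub /u; ring.
have D' : nrm (vsub (fun a => (1 - et) * x a + et * z a) p) <= nrm (vsub u p) + 2 * ep.
  rewrite ex; apply: Rle_trans (nrm_tri _ _) _.
  rewrite nrm_scal Rabs_pos_eq; last lra.
  have := nrm_ge0 (vsub z w); nra.
split; first lra.
have := nrm_ge0 (vsub (fun a => (1 - et) * x a + et * z a) p).
have := nrm_ge0 (vsub u p).
move: D' Ule UD cb; rewrite -!nrm_sq.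
set A := nrm (vsub (fun a => (1 - et) * x a + et * z a) p).
set U := nrm (vsub u p).
set X := nrm (vsub x p).
set W := nrm (vsub x w).
move=> D' Ule UD cb U0 A0.
have : A ^ 2 <= (U + 2 * ep) ^ 2 by nra.
have : 0 <= W ^ 2 by nra.
nra.
Qed.


Lemma nrm_block_le {N : nat} {d : 'I_N -> nat} (u v : profile d) i :
  nrm (vsub (block u i) (block v i)) <= nrm (vsub u v).
Proof.
rewrite !nrmE; apply: sqrt_le_1_alt.
rewrite /nsq (blk_sum i (fun a => (u a - v a)^2)).
apply: rsum_le => a; case: (tag a == i); first by apply: Rle_refl.
exact: pow2_ge_0.
Qed.

Lemma inf_sum_scal (e : nat -> R) s c : infinite_sum e s -> infinite_sum (fun n => c * e n) (c * s).
Proof.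
move=> H.
have eq : forall n, sum_f_R0 (fun n => c * e n) n = c * sum_f_R0 e n.
  by elim=> [|n IH] //=; rewrite IH; ring.
have := CV_mult _ _ _ _ (cv_const c) H.
move=> Hc ee eep; have [M HM] := Hc ee eep; exists M => n Hn; rewrite eq; exact: HM.
Qed.


Theorem mainTheorem8
  (N : nat) (d : 'I_N -> nat)
  (Q : forall i : 'I_N, ('I_(d i) -> R) -> Prop)
  (f : 'I_N -> profile d -> R)
  (O : profile d -> Prop)
  (D1 : 'I_N -> Idx d -> profile d -> R)
  (D2 : 'I_N -> Idx d -> Idx d -> profile d -> R)
  (tau : R) (eps eta : nat -> R) (Rm RM : R)
  (x z : nat -> profile d) :
  (* Assumption 1: Q_i nonempty, closed, convex *)
  (forall i, exists u, Q i u) ->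
  (forall i, closed_blk (Q i)) ->
  (forall i, convex_blk (Q i)) ->
  (* Assumption 1: f_i convex in x_i on Q *)
  (forall i (y w : profile d) t, inQ Q y -> inQ Q w -> same_off i y w -> 0 <= t <= 1 ->
     f i (fun a => t * y a + (1 - t) * w a) <= t * f i y + (1 - t) * f i w) ->
  (* Assumption 2: f_i twice continuously differentiable (on an open set O containing Q),
     D1 / D2 being its first / second partial derivatives, bounded derivatives on Q *)
  open_prof O ->
  (forall y, inQ Q y -> O y) ->
  (forall i a y, O y -> partial (f i) a y (D1 i a y)) ->
  (forall i a b y, O y -> partial (D1 i a) b y (D2 i a b y)) ->
  (forall i a, cont_on O (D1 i a)) ->
  (forall i a b, cont_on O (D2 i a b)) ->
  (exists M, forall i a b y, inQ Q y -> Rabs (D2 i a b y) <= M) ->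
  (* monotone NEP: F = grad D1 monotone on Q *)
  (forall y w, inQ Q y -> inQ Q w ->
     0 <= rsum (fun a => (grad D1 y a - grad D1 w a) * (y a - w a))) ->
  (* nonempty set of NE *)
  (exists xs, isNE Q f xs) ->
  (* tau > 0 and Upsilon_{F_{tau,y}} is a P-matrix for every y *)
  0 < tau ->
  (forall (y : profile d) (JG : block_jac d),
     (forall i j w (k : 'I_(d i)) (l : 'I_(d j)), inQ Q w ->
        partial (fun v => F_tau (grad D1) tau y v (coord k)) (coord l) w (JG i j w k l)) ->
     exists U, is_Upsilon Q JG U /\ P_matrix U) ->
  (* step data *)
  (forall n, 0 <= eps n) ->
  (exists s, infinite_sum eps s) ->
  0 < Rm -> Rm <= RM -> RM < 2 ->
  (forall n, Rm <= eta n <= RM) ->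
  (* the iteration *)
  inQ Q (x 0%nat) ->
  (forall n, x (S n) = (fun a => (1 - eta n) * x n a + eta n * z n a)) ->
  (forall n, exists w, isNE Q (reg_costs f tau (x n)) w /\ nrm (vsub (z n) w) <= eps n) ->
  exists xs, isNE Q f xs /\ conv_to x xs.
Proof.
move=> HQne HQcl HQconv Hfconv Oopen HQO Hpar Hpar2 Hcont Hcont2 Hbd Hmono [xs Hxs] taup HP Heps
  [s Hs] Rmp RmM RM2 Heta Hx0 Hxstep Hz.
have [w Hw] : exists w : nat -> profile d, forall n,
    isNE Q (reg_costs f tau (x n)) (w n) /\ nrm (vsub (z n) (w n)) <= eps n.
  exists (fun n => proj1_sig (constructive_indefinite_description _ (Hz n))).
  move=> n; exact: (proj2_sig (constructive_indefinite_description _ (Hz n))).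
have HwQ : forall n, inQ Q (w n) := fun n => (Hw n).1.1.
have Hstep : forall p, isNE Q f p -> forall n,
   nrm (vsub (x n.+1) p) <= nrm (vsub (x n) p) + 2 * eps n /\
   Rm * (2 - RM) * nrm (vsub (x n) (w n)) ^ 2 <= nrm (vsub (x n) p) ^ 2 - nrm (vsub (x n.+1) p) ^ 2
      + 4 * eps n * nrm (vsub (x n) p) + 4 * eps n ^ 2.
  move=> p Hp n; have [Hwn Hzn] := Hw n.
  have K : nsq (vsub (w n) p) + nsq (vsub (x n) (w n)) <= nsq (vsub (x n) p).
    apply: (key_ineq (grad D1) tau (x n) (w n) p taup).
    - exact: (VI_reg _ _ _ _ _ _ HQconv Oopen HQO Hpar Hcont tau (x n) (w n) Hwn p Hp.1).
    - exact: (VI_NE _ _ _ _ _ _ HQconv Oopen HQO Hpar Hcont p Hp (w n) Hwn.1).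
    - exact: Hmono (w n) p Hwn.1 Hp.1.
  rewrite Hxstep; exact: step_ineq Rmp (Heta n) RM2 Hzn K.
have Hfej : forall p, isNE Q f p -> (exists l, Un_cv (fun n => nrm (vsub (x n) p)) l) /\
    forall n, nrm (vsub (x n) p) <= nrm (vsub (x 0%nat) p) + 2 * s.
  move=> p Hp; apply: (quasi_fejer _ (fun n => 2 * eps n)).
  - move=> n; exact: nrm_ge0.
  - move=> n; have := Heps n; lra.
  - exact: inf_sum_scal.
  - move=> n; exact: (Hstep p Hp n).1.
have [[l0 Hl0] Hb0] := Hfej xs Hxs.
have cp : 0 < Rm * (2 - RM) by apply: Rmult_lt_0_compat; lra.
have Hr : Un_cv (fun n => nrm (vsub (x n) (w n))) 0.
  apply: cv_sqrt0; first by move=> n; exact: nrm_ge0.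
  apply: (cv_scal0 _ _ cp).
  set Dn := fun n => nrm (vsub (x n) xs).
  have He0 := summable_cv0 _ _ Hs.
  have Hl1 : Un_cv (fun n => Dn n.+1) l0 := cv_sub Dn l0 S Hl0 (fun n => le_n _).
  have Hv : Un_cv (fun n => Dn n * Dn n - Dn n.+1 * Dn n.+1 + (4 * eps n) * Dn n + 4 * (eps n * eps n))
                  (l0 * l0 - l0 * l0 + (4 * 0) * l0 + 4 * (0 * 0)).
    apply: CV_plus; [apply: CV_plus; [apply: CV_minus; apply: CV_mult => // |] |].
    - apply: CV_mult => //; apply: CV_mult => //; exact: cv_const.
    - apply: CV_mult; [exact: cv_const|]; exact: CV_mult.
  have e0 : l0 * l0 - l0 * l0 + (4 * 0) * l0 + 4 * (0 * 0) = 0 by ring.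
  rewrite e0 in Hv.
  apply: (squeeze0 _ _ _ Hv) => n; split.
    have := pow2_ge_0 (nrm (vsub (x n) (w n))); nra.
  have h := (Hstep xs Hxs n).2; rewrite /Dn; move: h; simpl; lra.
have Hbnd : forall a, exists B, forall n, Rabs (x n a) <= B.
  move=> a; exists (nrm (vsub (x 0%nat) xs) + 2 * s + Rabs (xs a)) => n.
  have h1 := coord_le_nrm (vsub (x n) xs) a; have h2 := Hb0 n.
  have t := Rabs_triang (x n a - xs a) (xs a).
  have e : x n a - xs a + xs a = x n a by ring.
  rewrite e in t; change (vsub (x n) xs a) with (x n a - xs a) in h1; lra.
have [phi [Hphi [xb Hxb]]] := BWn x Hbnd.
have Hxphi : Un_cv (fun n => nrm (vsub (x (phi n)) xb)) 0 := coord_cv_nrm (fun n => x (phi n)) xb Hxb.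
have Hrphi := cv_sub _ _ phi Hr Hphi.
have Hwphi : Un_cv (fun n => nrm (vsub (w (phi n)) xb)) 0.
  have Hsum := CV_plus _ _ _ _ Hrphi Hxphi; rewrite Rplus_0_r in Hsum.
  apply: (squeeze0 _ _ _ Hsum) => n; split; first exact: nrm_ge0.
  have -> : vsub (w (phi n)) xb = (fun a => vsub (w (phi n)) (x (phi n)) a + vsub (x (phi n)) xb a).
    by apply: functional_extensionality => a; rewrite /vsub; ring.
  apply: Rle_trans (nrm_tri _ _) _; rewrite (nrm_vsub_sym (w (phi n))); lra.
have xbQ : inQ Q xb.
  move=> i; apply: NNPP => nQ.
  have [r [rp Hr']] := HQcl i (block xb i) nQ.
  have [M HM] := Hwphi r rp.
  apply: (Hr' (block (w (phi M)) i)); last exact: HwQ (phi M) i.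
  apply: Rle_lt_trans (nrm_block_le _ _ i) _.
  have := HM M (le_n _); rewrite /Rdist Rminus_0_r Rabs_pos_eq //; exact: nrm_ge0.
have Hwc := nrm_cv_coord _ _ Hwphi.
have Hxc := nrm_cv_coord _ _ Hxphi.
have xbNE : isNE Q f xb.
  apply: (NE_of_VI _ _ _ _ _ _ Hfconv Oopen HQO Hpar Hcont xb xbQ) => v vQ.
  have Hseq : forall n, 0 <= rsum (fun a => (grad D1 (w (phi n)) a + tau * (w (phi n) a - x (phi n) a))
                                     * (v a - w (phi n) a)).
    move=> n; exact: (VI_reg _ _ _ _ _ _ HQconv Oopen HQO Hpar Hcont tau (x (phi n)) (w (phi n)) (Hw (phi n)).1 v vQ).
  have Hlim : Un_cv (fun n => rsum (fun a => (grad D1 (w (phi n)) a + tau * (w (phi n) a - x (phi n) a))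
                                     * (v a - w (phi n) a)))
                    (rsum (fun a => (grad D1 xb a + tau * (xb a - xb a)) * (v a - xb a))).
    apply: cv_rsum => a; apply: CV_mult.
    - apply: CV_plus.
      + rewrite /grad; exact: (cont_seq _ _ _ _ (Hcont (tag a) a) (HQO _ xbQ) (fun n => HQO _ (HwQ (phi n))) Hwphi).
      + apply: CV_mult; [exact: cv_const|]; exact: CV_minus.
    - apply: CV_minus; [exact: cv_const|exact: Hwc].
  have := lim_ge0 _ _ Hseq Hlim.
  have -> : rsum (fun a => (grad D1 xb a + tau * (xb a - xb a)) * (v a - xb a)) =
            rsum (fun a => grad D1 xb a * (v a - xb a)) by apply: rsum_ext => a; ring.
  by [].
have [[l1 Hl1] _] := Hfej xb xbNE.
have Hl1phi := cv_sub _ _ phi Hl1 Hphi.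
have l10 : l1 = 0 := UL_sequence _ _ _ Hl1phi Hxphi.
exists xb; split => //.
move=> e ep; have [M HM] := Hl1 e ep; exists M => n Hn.
move/leP: Hn => Hn.
have := HM n Hn; rewrite l10 /Rdist Rminus_0_r Rabs_pos_eq //; exact: nrm_ge0.
Qed.
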